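(* Let $q\geq 2$, let $A\in\mathbb{R}_{\geq0}^{q\times q}$, let $V$ be the value of the one-shot two-person zero-sum game defined by $A$, and let $0<\varepsilon\leq V$ be a constant. Let $\mathrm{ALG}$ be an algorithm (possibly randomized, with advice) for the repeated matrix game with cost matrix $A$. If $\mathbb{E}[\mathrm{ALG}(\sigma)]\leq (V-\varepsilon)n$ for every input $\sigma$ of length $n$, then $\mathrm{ALG}$ must read at least $$b\geq \frac{\varepsilon^2}{2\ln(2)\cdot\|A\|_\infty^2}\,n=\Omega(n)$$ bits of advice.
   Context: The one-shot game defined by $A$: a row player chooses $x\in[q]=\{1,\dots,q\}$, a column player chooses $y\in[q]$ simultaneously, and the column player pays $A(x,y)$ to the row player; its value $V$ is $\max_\mu\min_\nu\mathbb{E}_{x\sim\mu,y\sim\nu}A(x,y)$ over mixed strategies. $\|A\|_\infty=\max_{x,y}A(x,y)$. The repeated matrix game (RMG) with cost matrix $A$ is the online problem with inputs $\sigma=(n,x_1,\dots,x_n)$, $x_i\in[q]$; in round $i$ ($1\le i\le n$) the algorithm learns $n$ (if $i=1$) or $x_{i-1}$ (if $i>1$), then answers $y_i\in[q]$ as a function of $n,x_1,\dots,x_{i-1}$ (and its advice/randomness); the cost is $\sum_{i=1}^nA(x_i,y_i)$. Here $n$ (the number of characters) is called the length of the input. Algorithms with advice read bits from an infinite advice tape prepared by an oracle knowing the whole input; a randomized algorithm with advice is a probability distribution over deterministic algorithms with advice. *)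

(* Defs.v *)
From HB Require Import structures.
From mathcomp Require Import all_boot all_order all_algebra.
From mathcomp Require Import all_classical all_reals all_analysis.
Set Implicit Arguments. Unset Strict Implicit. Unset Printing Implicit Defensive.
Import Order.TTheory GRing.Theory Num.Theory.
Local Open Scope classical_set_scope.
Local Open Scope ring_scope.

Section Game.
Variables (R : realType) (q : nat).

(* mixed strategies on the action set 'I_q (= [q] shifted to 0..q-1) *)
Definition mixed_strategy : set ('I_q -> R) :=
  [set mu | (forall i, 0 <= mu i) /\ \sum_(i < q) mu i = 1].

Definition payoff (A : 'M[R]_q) (mu nu : 'I_q -> R) : R :=
  \sum_(x < q) \sum_(y < q) mu x * nu y * A x y.

Definition game_value (A : 'M[R]_q) : R :=
  sup [set inf [set payoff A mu nu | nu in mixed_strategy] | mu in mixed_strategy].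

(* ||A||_inf = max_{x,y} A(x,y)  (entries are nonnegative in the theorem) *)
Definition mat_maxnorm (A : 'M[R]_q) : R :=
  \big[Num.max/0]_(x < q) \big[Num.max/0]_(y < q) A x y.

(* A deterministic online algorithm with advice for the RMG: in round i
   (0-indexed) it answers as a function of n, the prefix x_0..x_{i-1}
   and the (infinite) advice tape. *)
Definition det_alg_adv := nat -> seq 'I_q -> (nat -> bool) -> 'I_q.

Definition rmg_cost (A : 'M[R]_q) (alg : det_alg_adv) (n : nat)
    (xs : n.-tuple 'I_q) (t : nat -> bool) : R :=
  \sum_(i < n) A (tnth xs i) (alg n (take i xs) t).

(* On input xs with tape t the algorithm reads at most the first b bits:
   its answers do not change when any bit beyond position b is changed. *)
Definition reads_at_most (alg : det_alg_adv) (n : nat) (xs : n.-tuple 'I_q)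
    (t : nat -> bool) (b : nat) : Prop :=
  forall t' : nat -> bool, (forall j, (j < b)%N -> t' j = t j) ->
  forall i, (i < n)%N -> alg n (take i xs) t' = alg n (take i xs) t.

End Game.

(* Main.v *)
Require Import Defs.
From HB Require Import structures.
From mathcomp Require Import all_boot all_order all_algebra.
From mathcomp Require Import all_classical all_reals all_analysis.
From mathcomp Require Import measurable_realfun.
From mathcomp Require Import ring lra.
Import Order.TTheory GRing.Theory Num.Theory numFieldNormedType.Exports.
Local Open Scope classical_set_scope.
Local Open Scope ring_scope.
Lemma expR_ge2 {R : realType} (x : R) : 0 <= x -> 1 + x + x ^+ 2 / 2 <= expR x.
Proof.
move=> x_ge0; rewrite /expR.
pose f (i : nat) := x ^+ i / i`!%:R *+ (i < 3)%N.
have F m : (2 < m)%N -> \sum_(0 <= i < m) f i = 1 + x + x ^+ 2 / 2.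
  move=> m2.
  rewrite (@big_cat_nat _ _ _ 3)//= [X in _ + X]big_nat_cond [X in _ + X]big1 ?addr0; last first.
    by move=> i /andP[/andP[i3 _] _]; rewrite /f ltnNge i3 mulr0n.
  rewrite !big_nat_recr //= big_nil /f /= add0r expr0 expr1 !mulr1n.
  rewrite /= !divr1. rewrite (_ : 2%:R = 2 :> R) //.
rewrite [leLHS](_ : _ = limn (@series R f)); last first.
  by apply/esym/(@lim_near_cst R^o) => //; near=> k; apply: F; near: k.
apply: ler_lim; first by apply: is_cvg_near_cst; near=> k; apply: F; near: k.
  exact: is_cvg_series_exp_coeff.
near=> k; apply: ler_sum => i _; rewrite /f /exp_coeff/=.
case: (i < 3)%N; rewrite ?mulr1n ?mulr0n //.
by rewrite divr_ge0// exprn_ge0.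
Unshelve. all: by end_near. Qed.

Lemma expRN_le {R : realType} {u : R} : 0 <= u -> expR (- u) <= 1 - u + u ^+ 2 / 2.
Proof.
move=> u0; have h := @expR_ge2 R u u0.
have a0 : 0 < 1 + u + u ^+ 2 / 2 by nra.
rewrite expRN (le_trans (_ : _ <= (1 + u + u ^+ 2 / 2)^-1)) //.
  by rewrite lef_pV2 ?posrE ?expR_gt0.
rewrite -[X in X <= _]mul1r ler_pdivrMr //.
have -> : (1 - u + u ^+ 2 / 2) * (1 + u + u ^+ 2 / 2) = 1 + u ^+ 4 / 4 by field.
by rewrite lerDl divr_ge0 // exprn_ge0.
Qed.

Lemma le_bigmax0 {R : realType} {I : finType} (F : I -> R) j :
  F j <= \big[Num.max/0]_(i : I) F i.
Proof.
have : j \in index_enum I by rewrite mem_index_enum.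
elim: (index_enum I) => //= a s IH; rewrite big_cons inE le_max.
by case/orP => [/eqP->|/IH->]; rewrite ?lexx ?orbT.
Qed.

Lemma sum_tupleS (R : realType) (q m : nat) (F : m.+1.-tuple 'I_q -> R) :
  \sum_(t : m.+1.-tuple 'I_q) F t =
  \sum_(x : 'I_q) \sum_(t : m.-tuple 'I_q) F [tuple of x :: t].
Proof.
rewrite pair_big /=.
rewrite (reindex (fun p : 'I_q * m.-tuple 'I_q => [tuple of p.1 :: p.2])) //=.
apply: onW_bij; exists (fun t => (thead t, [tuple of behead t])).
  by case=> x t /=; rewrite theadE; congr pair; apply: val_inj.
by move=> t /=; rewrite [RHS]tuple_eta; apply: val_inj.
Qed.

Section Step.
Variables (R : realType) (q : nat) (A : 'M[R]_q) (mu : 'I_q -> R).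
Hypothesis hA : forall x y, 0 <= A x y.
Hypothesis mu0 : forall i, 0 <= mu i.
Hypothesis mu1 : \sum_(i < q) mu i = 1.

Lemma A_le_M x y : A x y <= mat_maxnorm A.
Proof.
rewrite /mat_maxnorm (le_trans _ (le_bigmax0 _ x)) //.
exact: (le_bigmax0 (fun y => A x y) y).
Qed.

Lemma step_bound (m0 lam : R) : 0 <= lam ->
  (forall y, m0 <= \sum_(x < q) mu x * A x y) ->
  forall y, \sum_(x < q) mu x * expR (- (lam * A x y)) <=
            expR (- (lam * m0) + lam ^+ 2 * mat_maxnorm A ^+ 2 / 2).
Proof.
move=> lam0 hm y; set M := mat_maxnorm A.
apply: (le_trans (y := \sum_(x < q) (mu x * (1 + lam ^+ 2 * M ^+ 2 / 2) - lam * (mu x * A x y)))).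
  apply: ler_sum => x _.
  have h1 := expRN_le (mulr_ge0 lam0 (hA x y)).
  have h2 : A x y <= M by apply: A_le_M.
  have h3 := hA x y; have h4 := mu0 x.
  have h5 : (lam * A x y) ^+ 2 <= lam ^+ 2 * M ^+ 2.
    rewrite exprMn ler_wpM2l ?exprn_ge0 // ler_sqr ?nnegrE //; lra.
  apply: (le_trans (ler_wpM2l h4 h1)); nra.
rewrite sumrB -mulr_suml -mulr_sumr mu1 mul1r.
apply: (le_trans _ (expR_ge1Dx _)).
have := hm y; have : 0 <= lam := lam0; nra.
Qed.

Lemma sum_prod_tuple m :
  \sum_(t : m.-tuple 'I_q) \prod_(i < m) mu (tnth t i) = 1.
Proof.
elim: m => [|m IH].
  under eq_bigr do rewrite big_ord0.
  by rewrite sumr_const card_tuple expn0.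
rewrite sum_tupleS -[RHS]mu1; apply: eq_bigr => x _.
under eq_bigr do rewrite big_ord_recl tnth0.
rewrite -mulr_sumr.
under eq_bigr do under eq_bigr do rewrite tnthS.
by rewrite IH mulr1.
Qed.

Lemma martingale (lam c : R) :
  (forall y, \sum_(x < q) mu x * expR (- (lam * A x y)) <= expR c) ->
  forall m (g : seq 'I_q -> 'I_q),
  \sum_(t : m.-tuple 'I_q)
     \prod_(i < m) (mu (tnth t i) * expR (- (lam * A (tnth t i) (g (take i t)))))
  <= expR c ^+ m.
Proof.
move=> hs; elim=> [|m IH] g.
  under eq_bigr do rewrite big_ord0.
  by rewrite sumr_const card_tuple expn0.
rewrite sum_tupleS.
have E : forall x (t : m.-tuple 'I_q),
  \prod_(i < m.+1) (mu (tnth [tuple of x :: t] i) *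
      expR (- (lam * A (tnth [tuple of x :: t] i) (g (take i [tuple of x :: t])))))
  = (mu x * expR (- (lam * A x (g [::])))) *
    \prod_(i < m) (mu (tnth t i) *
      expR (- (lam * A (tnth t i) ((fun s => g (x :: s)) (take i t))))).
  move=> x t; rewrite big_ord_recl tnth0 /=; congr (_ * _).
  by apply: eq_bigr => i _; rewrite tnthS.
under eq_bigr do under eq_bigr do rewrite E.
under eq_bigr do rewrite -mulr_sumr.
rewrite exprS.
apply: (le_trans (y := \sum_(x < q) (mu x * expR (- (lam * A x (g [::])))) * expR c ^+ m)).
  apply: ler_sum => x _; apply: ler_wpM2l; last exact: (IH (fun s => g (x :: s))).
  by rewrite mulr_ge0 ?expR_ge0.
by rewrite -mulr_suml ler_wpM2r ?exprn_ge0 ?expR_ge0.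
Qed.

End Step.

Section DB.
Variables (R : realType) (q : nat) (A : 'M[R]_q) (mu : 'I_q -> R).
Hypothesis hA : forall x y, 0 <= A x y.
Hypothesis mu0 : forall i, 0 <= mu i.
Hypothesis mu1 : \sum_(i < q) mu i = 1.
Variables (lam c : R).
Hypothesis lam0 : 0 < lam.
Hypothesis hs : forall y, \sum_(x < q) mu x * expR (- (lam * A x y)) <= expR c.
Variables (f : det_alg_adv q) (T : seq 'I_q -> nat -> bool) (n b : nat).
Hypothesis hbits : forall xs : n.-tuple 'I_q, reads_at_most f xs (T xs) b.

Let S := {ffun 'I_b -> bool}.
Let tape (s : S) : nat -> bool :=
  fun j => match (insub j : option 'I_b) with Some k => s k | None => false end.
Let sx (xs : n.-tuple 'I_q) : S := [ffun k : 'I_b => T xs k].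
Let Cs (s : S) (xs : n.-tuple 'I_q) : R :=
  \sum_(i < n) A (tnth xs i) (f n (take i xs) (tape s)).
Let p (xs : n.-tuple 'I_q) : R := \prod_(i < n) mu (tnth xs i).
Let cost (xs : n.-tuple 'I_q) := rmg_cost A f xs (T xs).

Lemma p_ge0 xs : 0 <= p xs.
Proof. by apply: prodr_ge0 => i _; apply: mu0. Qed.

Lemma cost_Cs xs : cost xs = Cs (sx xs) xs.
Proof.
rewrite /cost /rmg_cost /Cs; apply: eq_bigr => i _; congr (A _ _).
symmetry; apply: (hbits xs) => // j jb.
rewrite /tape; case: insubP => [k _ kj|]; last by rewrite jb.
by rewrite /sx ffunE kj.
Qed.

Let Y xs := \sum_(s : S) expR (- (lam * Cs s xs)).

Lemma Y_ge xs : expR (- (lam * cost xs)) <= Y xs.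
Proof.
rewrite cost_Cs /Y (bigD1 (sx xs)) //= lerDl.
by apply: sumr_ge0 => s _; apply: expR_ge0.
Qed.

Lemma Y_gt0 xs : 0 < Y xs.
Proof. exact: lt_le_trans (expR_gt0 _) (Y_ge xs). Qed.

Lemma lnY xs : - (lam * cost xs) <= ln (Y xs).
Proof.
rewrite -[X in X <= _]expRK ler_ln ?posrE ?expR_gt0 ?Y_gt0 //.
exact: Y_ge.
Qed.

Let K := \sum_(xs : n.-tuple 'I_q) p xs * Y xs.

Lemma K_gt0 : 0 < K.
Proof.
rewrite lt_def; apply/andP; split; last first.
  by apply: sumr_ge0 => xs _; rewrite mulr_ge0 ?p_ge0 ?ltW ?Y_gt0.
apply/eqP => K0.
have h := psumr_eq0P (fun xs _ => mulr_ge0 (p_ge0 xs) (ltW (Y_gt0 xs))) K0.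
have : \sum_(xs : n.-tuple 'I_q) p xs = 0.
  apply: big1 => xs _; have := h xs isT.
  by move/eqP; rewrite mulf_eq0 (gt_eqF (Y_gt0 xs)) orbF => /eqP.
by rewrite /p sum_prod_tuple // => /eqP; rewrite oner_eq0.
Qed.

Lemma K_le : K <= 2%:R ^+ b * expR c ^+ n.
Proof.
rewrite /K /Y.
under eq_bigr do rewrite mulr_sumr.
rewrite exchange_big /=.
apply: (le_trans (y := \sum_(s : S) expR c ^+ n)); last first.
  by rewrite sumr_const /S card_ffun card_bool card_ord -natrX mulr_natl.
apply: ler_sum => s _.
rewrite -/(Cs s _).
have E : forall xs, p xs * expR (- (lam * Cs s xs)) =
  \prod_(i < n) (mu (tnth xs i) *
     expR (- (lam * A (tnth xs i) ((fun l => f n l (tape s)) (take i xs))))).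
  move=> xs; rewrite big_split /=; congr (_ * _).
  by rewrite /Cs mulr_sumr -sumrN expR_sum.
under eq_bigr do rewrite E.
exact: (@martingale R q A mu mu0 lam c hs n (fun l => f n l (tape s))).
Qed.

Lemma det_bound :
  - (b%:R * ln 2 + c * n%:R) <= lam * \sum_(xs : n.-tuple 'I_q) p xs * cost xs.
Proof.
have Kp := K_gt0.
have sp : \sum_(xs : n.-tuple 'I_q) p xs = 1 := @sum_prod_tuple R q mu mu1 n.
have h1 : forall xs, ln (Y xs) <= ln K + (Y xs / K - 1).
  move=> xs.
  have YK0 : 0 < Y xs / K by rewrite divr_gt0 ?Y_gt0.
  have pos : 0 < 1 + (Y xs / K - 1) by rewrite addrC subrK.
  have YK : Y xs = K * (1 + (Y xs / K - 1)) by rewrite addrC subrK mulrC divfK ?gt_eqF.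
  rewrite {1}YK lnM ?posrE // lerD2l; apply: le_ln1Dx; lra.
have h2 : \sum_(xs : n.-tuple 'I_q) p xs * ln (Y xs) <= ln K.
  apply: (le_trans (y := \sum_(xs : n.-tuple 'I_q) p xs * (ln K + (Y xs / K - 1)))).
    by apply: ler_sum => xs _; rewrite ler_wpM2l ?p_ge0.
  under eq_bigr do rewrite mulrDr mulrBr mulr1 mulrA.
  rewrite big_split sumrB /= -!mulr_suml -/K sp mulfV ?gt_eqF //; lra.
have h3 : ln K <= b%:R * ln 2 + c * n%:R.
  rewrite (le_trans (y := ln (2%:R ^+ b * expR c ^+ n))) //.
    by rewrite ler_ln ?posrE ?K_le // mulr_gt0 ?exprn_gt0 ?expR_gt0.
  by rewrite lnM ?posrE ?exprn_gt0 ?expR_gt0 // !lnXn ?expR_gt0 // expRK mulr_natl mulr_natr.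
have h5 : - (lam * \sum_(xs : n.-tuple 'I_q) p xs * cost xs) <= \sum_(xs : n.-tuple 'I_q) p xs * ln (Y xs).
  rewrite mulr_sumr -sumrN; apply: ler_sum => xs _.
  by rewrite mulrCA -mulrN ler_wpM2l ?p_ge0 ?lnY.
rewrite lerNl; exact: le_trans h5 (le_trans h2 h3).
Qed.

End DB.

Lemma integral_part (R : realType) (d : measure_display) (Omega : measurableType d)
  (P : probability Omega R) (I : finType) (p : I -> R) (F : Omega -> I -> R) (C L : R) :
  (forall i, 0 <= p i) -> \sum_i p i = 1 -> (forall w i, 0 <= F w i) ->
  (forall i, measurable_fun setT (fun w => F w i)) ->
  (forall i, (\int[P]_w (F w i)%:E <= C%:E)%E) -> 0 <= C ->
  (forall w, L <= \sum_i p i * F w i) -> L <= C.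
Proof.
move=> p0 p1 F0 mF hC C0 hL.
have [L0|L0] := leP L 0; first exact: le_trans L0 C0.
rewrite -lee_fin.
have mFE : forall i, measurable_fun [set: Omega] (fun w => (p i * F w i)%:E).
  move=> i; apply/measurable_EFinP.
  exact: measurable_funM (measurable_cst _) (mF i).
apply: (@le_trans _ _ (\int[P]_w (\sum_i ((p i * F w i)%:E : \bar R)))%E).
  have eqc : (\int[P]_w (cst L%:E w) = L%:E)%E.
    rewrite integral_cst // -[RHS]mule1; congr (_ * _)%E; exact: probability_setT.
  rewrite -[X in (X <= _)%E]eqc.
  apply: ge0_le_integral => //.
  - by move=> w _; rewrite lee_fin ltW.
  - exact: emeasurable_sum.
  - by move=> w _; rewrite sumEFin lee_fin.
rewrite ge0_integral_sum //; last first.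
  by move=> i w _; rewrite lee_fin mulr_ge0.
apply: (@le_trans _ _ (\sum_i ((p i)%:E * C%:E))%E).
  apply: lee_sum => i _.
  rewrite (_ : (\int[P]_w (p i * F w i)%:E = \int[P]_w ((p i)%:E * (F w i)%:E))%E) //.
  rewrite ge0_integralZl ?lee_fin //.
  - by apply: lee_wpmul2l; rewrite ?lee_fin.
  - exact/measurable_EFinP.
  - by move=> w _; rewrite lee_fin.
by rewrite -(eq_bigr _ (fun i _ => EFinM _ _)) sumEFin -mulr_suml p1 mul1r.
Qed.

Lemma gv_approx (R : realType) (q : nat) (hq : (0 < q)%N) (A : 'M[R]_q)
  (hA : forall x y, 0 <= A x y) (del : R) : 0 < del ->
  exists mu : 'I_q -> R, [/\ forall i, 0 <= mu i, \sum_(i < q) mu i = 1 &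
    forall y, game_value A - del <= \sum_(x < q) mu x * A x y].
Proof.
move=> del0.
pose e (y : 'I_q) := fun i : 'I_q => ((i == y)%:R : R).
have e_mixed y : mixed_strategy (e y).
  split; first by move=> i; rewrite /e ler0n.
  by rewrite (bigD1 y) //= /e eqxx big1 ?addr0 // => i /negbTE ->.
have pay_e mu y : payoff A mu (e y) = \sum_(x < q) mu x * A x y.
  rewrite /payoff; apply: eq_bigr => x _.
  rewrite (bigD1 y) //= /e eqxx mulr1 big1 ?addr0 // => i /negbTE ->.
  by rewrite mulr0 mul0r.
pose T mu := [set payoff A mu nu | nu in @mixed_strategy R q].
have lb mu : mixed_strategy mu -> has_lbound (T mu).
  move=> [mu0 _]; exists 0 => z [nu [nu0 _] <-].
  by apply: sumr_ge0 => x _; apply: sumr_ge0 => y _; rewrite !mulr_ge0.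
have infle mu y : mixed_strategy mu -> inf (T mu) <= \sum_(x < q) mu x * A x y.
  by move=> hmu; rewrite -pay_e; apply: (ge_inf (lb mu hmu)); exists (e y).
set y0 : 'I_q := Ordinal hq.
have hsup : has_sup [set inf (T mu) | mu in @mixed_strategy R q].
  split.
    exists (inf (T (fun _ => q%:R^-1))); exists (fun _ => q%:R^-1) => //.
    split; first by move=> i; rewrite invr_ge0 ler0n.
    by rewrite sumr_const card_ord -[_ *+ q]mulr_natl mulfV // pnatr_eq0 -lt0n.
  exists (mat_maxnorm A) => z [mu hmu <-].
  apply: (le_trans (infle mu y0 hmu)).
  apply: (@le_trans _ _ (\sum_(x < q) mu x * mat_maxnorm A)).
    by apply: ler_sum => x _; rewrite ler_wpM2l ?(hmu.1 x) ?A_le_M.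
  by rewrite -mulr_suml hmu.2 mul1r.
have [z [mu hmu <-] hz] := sup_adherent del0 hsup.
exists mu; split; [exact: hmu.1 | exact: hmu.2 |] => y.
rewrite /game_value; apply: (le_trans (ltW hz)); exact: infle.
Qed.

Theorem theorem3 (R : realType) (q : nat) (hq : (2 <= q)%N)
  (A : 'M[R]_q) (hA : forall x y, 0 <= A x y)
  (eps : R) (heps : 0 < eps) (hepsV : eps <= game_value A)
  (d : measure_display) (Omega : measurableType d) (P : probability Omega R)
  (alg : Omega -> det_alg_adv q) (adv : Omega -> seq 'I_q -> (nat -> bool))
  (n b : nat)
  (hmeas : forall xs : n.-tuple 'I_q,
     measurable_fun setT (fun w => rmg_cost A (alg w) xs (adv w xs)))
  (hcost : forall xs : n.-tuple 'I_q,
     (\int[P]_w (rmg_cost A (alg w) xs (adv w xs))%:E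
        <= ((game_value A - eps) * n%:R)%:E)%E)
  (hbits : forall w (xs : n.-tuple 'I_q), reads_at_most (alg w) xs (adv w xs) b) :
  eps ^+ 2 / (2 * ln 2 * mat_maxnorm A ^+ 2) * n%:R <= b%:R.
Proof.
set V := game_value A in hepsV hcost *.
set M := mat_maxnorm A.
set N : R := n%:R.
have q0 : (0 < q)%N by apply: leq_trans hq.
have y0 : 'I_q := Ordinal q0.
have Mpos : 0 < M.
  have [mu [mu0 mus hm]] := @gv_approx R q q0 A hA _ (divr_gt0 heps (ltr0n R 2)).
  have h := hm y0.
  have h2 : \sum_(x < q) mu x * A x y0 <= M.
    apply: (@le_trans _ _ (\sum_(x < q) mu x * M)).
      by apply: ler_sum => x _; rewrite ler_wpM2l ?A_le_M.
    by rewrite -mulr_suml mus mul1r.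
  rewrite -/V in h; lra.
have N0 : 0 <= N by rewrite ler0n.
have l2 : 0 < ln (2 : R) by rewrite ln_gt0 // ltr1n.
have key : forall del, 0 < del ->
    N * eps ^+ 2 / (2 * M ^+ 2) <= b%:R * ln 2 + N * eps * del / M ^+ 2.
  move=> del del0.
  have [mu [mu0 mus hm]] := @gv_approx R q q0 A hA _ del0.
  set lam := eps / M ^+ 2.
  have lam0 : 0 < lam by rewrite divr_gt0 // exprn_gt0.
  have lamM : lam * M ^+ 2 = eps by rewrite /lam divfK // gt_eqF // exprn_gt0.
  set c := - (lam * (V - del)) + lam ^+ 2 * M ^+ 2 / 2.
  have hs := @step_bound R q A mu hA mu0 mus (V - del) lam (ltW lam0) hm.
  have hL : - (b%:R * ln 2 + c * N) / lam <= (V - eps) * N.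
    apply: (@integral_part R d Omega P _ (fun xs : n.-tuple 'I_q => \prod_(i < n) mu (tnth xs i))
              (fun w xs => rmg_cost A (alg w) xs (adv w xs))).
    - by move=> xs; apply: prodr_ge0 => i _.
    - exact: (@sum_prod_tuple R q mu mus n).
    - by move=> w xs; apply: sumr_ge0 => i _.
    - exact: hmeas.
    - exact: hcost.
    - by rewrite mulr_ge0 // subr_ge0.
    - move=> w; rewrite ler_pdivrMr // [X in _ <= X]mulrC.
      exact: (@det_bound R q A mu mu0 mus lam c hs (alg w) (adv w) n b (hbits w)).
  rewrite ler_pdivrMr // in hL.
  have e1 : - (b%:R * ln 2 + c * N) =
      - (b%:R * ln 2) + N * lam * V - N * lam * del - N * lam * eps / 2.
    by rewrite /c -lamM; field.
  have e2 : N * eps ^+ 2 / (2 * M ^+ 2) = N * lam * eps / 2.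
    rewrite /lam; field; rewrite gt_eqF // exprn_gt0.
  have e3 : N * eps * del / M ^+ 2 = N * lam * del.
    rewrite /lam; field; rewrite gt_eqF // exprn_gt0.
  rewrite e1 in hL; rewrite e2 e3.
  have e4 : (V - eps) * N * lam = N * lam * V - N * lam * eps by ring.
  rewrite e4 in hL; move: hL; set a1 := N * lam * V; set a2 := N * lam * del; set a3 := N * lam * eps; set a4 := b%:R * ln 2; lra.
have main : N * eps ^+ 2 / (2 * M ^+ 2) <= b%:R * ln 2.
  apply/ler_addgt0Pr => e e0.
  have dpos : 0 < e * M ^+ 2 / (eps * (N + 1)).
    apply: divr_gt0; [apply: mulr_gt0 => //; exact: exprn_gt0 | apply: mulr_gt0 => //; lra].
  apply: (le_trans (key _ dpos)); rewrite lerD2l.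
  have -> : N * eps * (e * M ^+ 2 / (eps * (N + 1))) / M ^+ 2 = e * (N / (N + 1)).
    by field; rewrite !gt_eqF ?exprn_gt0 //; lra.
  rewrite ger_pMr // ler_pdivrMr; lra.
have -> : eps ^+ 2 / (2 * ln 2 * M ^+ 2) * N = (N * eps ^+ 2 / (2 * M ^+ 2)) / ln 2.
  by field; rewrite !gt_eqF ?exprn_gt0.
by rewrite ler_pdivrMr.
Qed.
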